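(* Let $\Gamma$ be a graph and let $f:\Gamma\to\Gamma$ be an irreducible graph map which is a homotopy equivalence, and suppose $f$ has a fold decomposition consisting of $m$ folds. Let $n=|\mathcal{E}\Gamma|$. Then $$(m+1)^{1/n}\le \lambda_f,$$ where $\lambda_f$ is the largest eigenvalue of the transition matrix $T(f)$.
   Context: A graph $\Gamma$ is a finite 1-dimensional CW complex (multiple edges and loops allowed) with a chosen orientation on each edge; $\mathcal{V}\Gamma$ is its vertex set, $\mathcal{E}\Gamma$ its set of (positively oriented) edges, $\mathcal{E}^{\pm}\Gamma$ the set of edges with both orientations, $\bar e$ the reverse of $e$, and $\iota(e),\tau(e)$ the initial and terminal vertices. An edge path is a nonempty concatenation $u=e_1\cdots e_k$ of oriented edges with $\tau(e_i)=\iota(e_{i+1})$; $|u|=k$ counts edges without cancelling backtracks, and $u$ traverses an edge $e$ if $e$ or $\bar e$ occurs in it. A graph map $f:\Gamma_1\to\Gamma_2$ consists of a vertex map $f_V$ and an assignment of an edge path $f(e)$ in $\Gamma_2$ to each $e\in\mathcal{E}^\pm\Gamma_1$ with $\iota(f(e))=f_V(\iota(e))$ and $f(\bar e)=\overline{f(e)}$; it extends to edge paths by concatenation (no tightening), and is regarded as a continuous map. A graph isomorphism is a graph map with $f_V$ bijective which restricts to a bijection from $\mathcal{E}^\pm\Gamma_1$ onto the single edges $\mathcal{E}^\pm\Gamma_2$. For a self graph map $f:\Gamma\to\Gamma$ with edges ordered $e_1,\dots,e_n$, the transition matrix $T(f)$ has $(i,j)$ entry equal to the number of times $f(e_i)$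 traverses $e_j$ (in either direction). $f$ is irreducible if $T(f)$ is an irreducible matrix (for every $i,j$ some power $T(f)^k$ has positive $(i,j)$ entry) and every vertex of $\Gamma$ has valence at least $3$. Folds: let $e_0,e_1\in\mathcal{E}^\pm\Gamma$ be distinct oriented edges with $e_1\ne\bar e_0$ and $\iota(e_0)=\iota(e_1)$. (i) The proper full fold of $e_1$ over $e_0$: subdivide $e_1$ as $e_1''e_1'$ and identify $e_1''$ with $e_0$; the quotient graph map sends $e_1\mapsto e_0e_1'$ and fixes all other edges. (ii) The complete fold of $e_0,e_1$: identify $e_0$ and $e_1$ entirely (quotient map). (iii) The partial fold of $e_1$ over $e_0$: subdivide $e_0=e_0'e_0''$ and $e_1=e_1''e_1'$ and identify $e_1''$ with $e_0'$; the quotient map sends $e_0\mapsto e_0'e_0''$, $e_1\mapsto e_0'e_1'$, other edges fixed. A fold decomposition of $f:\Gamma\to\Gamma$ consisting of $m$ folds is an expression $f=h\circ f_m\circ\cdots\circ f_1$ where $\Gamma_1=\Gamma$, each $f_i:\Gamma_i\to\Gamma_{i+1}$ is a fold, and $h:\Gamma_{m+1}\to\Gamma$ is a graph isomorphism. *)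

(* Defs.v *)
From HB Require Import structures.
From mathcomp Require Import all_boot all_order all_algebra all_field.
Set Implicit Arguments. Unset Strict Implicit. Unset Printing Implicit Defensive.
Import Order.TTheory GRing.Theory Num.Theory.

(* A finite graph: vertices 'I_nV, positively oriented edges 'I_nE,
   each edge e with initial vertex src e and terminal vertex tgt e.
   Multiple edges and loops are allowed. *)
Record graph := Graph {
  nV : nat;
  nE : nat;
  src : 'I_nE -> 'I_nV;
  tgt : 'I_nE -> 'I_nV }.

Definition vert (G : graph) := 'I_(nV G).
Definition edge (G : graph) := 'I_(nE G).
(* oriented edges: (e, true) = e, (e, false) = \bar e *)
Definition dart (G : graph) := (edge G * bool)%type.

Section Darts.
Variable G : graph.
Definition dsrc (d : dart G) : vert G := if d.2 then src d.1 else tgt d.1.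
Definition dtgt (d : dart G) : vert G := if d.2 then tgt d.1 else src d.1.
Definition drev (d : dart G) : dart G := (d.1, ~~ d.2).
Definition prev (p : seq (dart G)) : seq (dart G) := rev (map drev p).
Definition adj (d d' : dart G) : bool := dtgt d == dsrc d'.

Definition epath_from_to (p : seq (dart G)) (x y : vert G) : bool :=
  match p with
  | [::] => false
  | d :: p' => [&& path adj d p', dsrc d == x & dtgt (last d p') == y]
  end.

Definition walk_from_to (p : seq (dart G)) (x y : vert G) : bool :=
  match p with
  | [::] => x == y
  | d :: p' => [&& path adj d p', dsrc d == x & dtgt (last d p') == y]
  end.

(* free reduction (cancelling backtracks d \bar d) *)
Definition reduce (p : seq (dart G)) : seq (dart G) :=
  foldr (fun d acc => match acc with
                      | d' :: acc' => if d' == drev d then acc' else d :: acc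
                      | [::] => [:: d] end) [::] p.

(* valence of a vertex (loops count twice) *)
Definition valence (v : vert G) : nat := #|[pred d : dart G | dsrc d == v]|.
End Darts.

(* data of a map: a vertex map and, for each positively oriented edge,
   an edge path; the image of \bar e is the reverse path *)
Record gmap (G1 G2 : graph) := GMap {
  mV : vert G1 -> vert G2;
  mE : edge G1 -> seq (dart G2) }.

Definition mD G1 G2 (f : gmap G1 G2) (d : dart G1) : seq (dart G2) :=
  if d.2 then mE f d.1 else prev (mE f d.1).

Definition is_graph_map G1 G2 (f : gmap G1 G2) : Prop :=
  forall e : edge G1, epath_from_to (mE f e) (mV f (src e)) (mV f (tgt e)).

(* a combinatorial map, where edges may also be collapsed to a vertex *)
Definition is_cmap G1 G2 (f : gmap G1 G2) : Prop :=
  forall e : edge G1, walk_from_to (mE f e) (mV f (src e)) (mV f (tgt e)).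

(* composition g o f, extended to edge paths by concatenation (no tightening) *)
Definition comp G1 G2 G3 (g : gmap G2 G3) (f : gmap G1 G2) : gmap G1 G3 :=
  GMap (fun v => mV g (mV f v)) (fun e => flatten (map (mD g) (mE f e))).

Definition gid (G : graph) : gmap G G := GMap (fun v => v) (fun e => [:: (e, true)]).

Definition gmap_eq G1 G2 (f g : gmap G1 G2) : Prop :=
  (forall v, mV f v = mV g v) /\ (forall e, mE f e = mE g e).

Definition is_iso G1 G2 (f : gmap G1 G2) : Prop :=
  is_graph_map f /\ bijective (mV f) /\
  exists s : dart G1 -> dart G2, bijective s /\ forall d, mD f d = [:: s d].

(* Combinatorial model of free homotopy of maps of graphs: f ~ g iff there are
   paths q_v from f(v) to g(v) with f(e) q_{tau e} ~ q_{iota e} g(e) rel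
   endpoints, i.e. with equal free reductions. *)
Definition homotopic G1 G2 (f g : gmap G1 G2) : Prop :=
  exists q : vert G1 -> seq (dart G2),
    (forall v, walk_from_to (q v) (mV f v) (mV g v)) /\
    (forall e, reduce (mE f e ++ q (tgt e)) = reduce (q (src e) ++ mE g e)).

Definition is_heq G1 G2 (f : gmap G1 G2) : Prop :=
  exists g : gmap G2 G1, is_cmap g /\
    homotopic (comp g f) (gid G1) /\ homotopic (comp f g) (gid G2).

Section Folds.
Variables G1 G2 : graph.
Implicit Types f : gmap G1 G2.

(* proper full fold of e1 over e0 (up to an isomorphism of the target):
   e1 |-> e0 e1', all other edges map to single edges, bijectively *)
Definition full_fold f (e0 e1 : dart G1) : Prop :=
  bijective (mV f) /\
  exists (s : dart G1 -> dart G2) (x : dart G2),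
    (forall d, d.1 != e1.1 -> mD f d = [:: s d]) /\
    mD f e1 = [:: s e0; x] /\
    (forall d d', d.1 != e1.1 -> d'.1 != e1.1 -> s d = s d' -> d = d') /\
    (forall d, d.1 != e1.1 -> (s d).1 != x.1) /\
    (forall e2 : edge G2, e2 = x.1 \/ exists d, d.1 != e1.1 /\ (s d).1 = e2).

(* complete fold of e0 and e1: identify them (and their endpoints) entirely *)
Definition complete_fold f (e0 e1 : dart G1) : Prop :=
  (forall v w, mV f v = mV f w <->
     v = w \/ (v = dtgt e0 /\ w = dtgt e1) \/ (v = dtgt e1 /\ w = dtgt e0)) /\
  (forall y, exists v, mV f v = y) /\
  exists s : dart G1 -> dart G2,
    (forall d, mD f d = [:: s d]) /\
    (forall d d', s d = s d' <->
       d = d' \/ (d = e0 /\ d' = e1) \/ (d = e1 /\ d' = e0)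
       \/ (d = drev e0 /\ d' = drev e1) \/ (d = drev e1 /\ d' = drev e0)) /\
    (forall y, exists d, s d = y).

(* partial fold of e1 over e0: e0 |-> e0' e0'', e1 |-> e0' e1', with a new
   vertex u = tau(e0') *)
Definition partial_fold f (e0 e1 : dart G1) : Prop :=
  injective (mV f) /\
  exists (u : vert G2) (s : dart G1 -> dart G2) (a b c : dart G2),
    (forall v, mV f v != u) /\ (forall y, y = u \/ exists v, mV f v = y) /\
    dtgt a = u /\
    (forall d, d.1 != e0.1 -> d.1 != e1.1 -> mD f d = [:: s d]) /\
    mD f e0 = [:: a; b] /\ mD f e1 = [:: a; c] /\
    uniq [:: a.1; b.1; c.1] /\
    (forall d d', d.1 != e0.1 -> d.1 != e1.1 -> d'.1 != e0.1 -> d'.1 != e1.1 ->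
       s d = s d' -> d = d') /\
    (forall d, d.1 != e0.1 -> d.1 != e1.1 -> (s d).1 \notin [:: a.1; b.1; c.1]) /\
    (forall e2 : edge G2, e2 \in [:: a.1; b.1; c.1] \/
       exists d, [/\ d.1 != e0.1, d.1 != e1.1 & (s d).1 = e2]).

Definition is_fold f : Prop :=
  is_graph_map f /\
  exists e0 e1 : dart G1,
    [/\ e0 != e1, e1 != drev e0, dsrc e0 = dsrc e1 &
        full_fold f e0 e1 \/ complete_fold f e0 e1 \/ partial_fold f e0 e1].
End Folds.

(* fold_chain f m : f = h o f_m o ... o f_1 with folds f_i and an isomorphism h *)
Inductive fold_chain : forall G G' : graph, gmap G G' -> nat -> Prop :=
| fc_iso G G' (h : gmap G G') : is_iso h -> fold_chain h 0
| fc_step G G1 G' (f1 : gmap G G1) (g : gmap G1 G') (f : gmap G G') m :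
    is_fold f1 -> fold_chain g m -> gmap_eq f (comp g f1) -> fold_chain f m.+1.

Definition has_fold_decomposition G (f : gmap G G) (m : nat) : Prop :=
  fold_chain f m.

Local Open Scope ring_scope.

Definition transition G (f : gmap G G) : 'M[algC]_(nE G) :=
  \matrix_(i, j) ((count (fun d : dart G => d.1 == j) (mE f i))%:R).

Definition irreducible_mx n (A : 'M[algC]_n) : Prop :=
  forall i j, exists k, (0 < k)%N /\ 0 < (A ^+ k) i j.

Definition irreducible_map G (f : gmap G G) : Prop :=
  irreducible_mx (transition f) /\ forall v : vert G, (3 <= valence v)%N.

Definition largest_eigenvalue n (A : 'M[algC]_n) (lam : algC) : Prop :=
  eigenvalue A lam /\ lam \is Num.real /\
  forall mu, eigenvalue A mu -> mu \is Num.real -> mu <= lam.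

(* Main.v *)
Require Import Defs.
From HB Require Import structures.
From mathcomp Require Import all_boot all_order all_algebra all_field.
From mathcomp Require Import zify ring.
Import Order.TTheory GRing.Theory Num.Theory.

Fixpoint Pw n (c : 'I_n -> 'I_n -> nat) (k : nat) (i j : 'I_n) : nat :=
  if k is k'.+1 then \sum_l c i l * Pw n c k' l j else (i == j).
Fixpoint sN n (c : 'I_n -> 'I_n -> nat) (k : nat) (i : 'I_n) : nat :=
  if k is k'.+1 then \sum_j c i j * sN n c k' j else 1.
Arguments Pw {n} c k i j.
Arguments sN {n} c k i.

Lemma sN_Pw n (c : 'I_n -> 'I_n -> nat) k i : sN c k i = \sum_j Pw c k i j.
Proof.
elim: k i => [|k IH] i /=.
  by rewrite (bigD1 i) //= eqxx big1 // => j /negbTE; rewrite eq_sym => ->.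
rewrite exchange_big /=; apply: eq_bigr => l _; rewrite IH big_distrr //.
Qed.

Lemma Pw_assoc n (c : 'I_n -> 'I_n -> nat) k i j :
  Pw c k.+1 i j = \sum_l Pw c k i l * c l j.
Proof.
elim: k i j => [|k IH] i j.
  rewrite /= [LHS](bigD1 j) // [RHS](bigD1 i) //= !eqxx muln1 mul1n.
  rewrite [X in _ + X = _]big1 ?[X in _ = _ + X]big1 //.
    by move=> l /negbTE; rewrite eq_sym => ->; rewrite mul0n.
  by move=> l /negbTE ->; rewrite muln0.
transitivity (\sum_l c i l * Pw c k.+1 l j); first by [].
under eq_bigr do rewrite IH big_distrr /=.
rewrite exchange_big /=; apply: eq_bigr => l _; rewrite big_distrl /=.
by apply: eq_bigr => m _; rewrite mulnA.
Qed.

Lemma sum_gt0P (I : finType) (F : I -> nat) : reflect (exists i, 0 < F i) (0 < \sum_i F i).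
Proof.
rewrite lt0n sum_nat_eq0; apply: (iffP idP).
  move=> /forallPn [i /= Hi]; exists i; rewrite lt0n; exact: Hi.
move=> [i Hi]; apply/forallPn; exists i => /=; rewrite -lt0n; exact: Hi.
Qed.

Lemma outdeg_pos n (c : 'I_n -> 'I_n -> nat)
  (Hirr : forall i j, exists k, 0 < k /\ 0 < Pw c k i j) l : 0 < \sum_j c l j.
Proof.
have [[|k] [//= _ H]] := Hirr l l.
move/sum_gt0P: H => [m]; rewrite muln_gt0 => /andP [Hm _].
by apply/sum_gt0P; exists m.
Qed.

Definition Rs n (c : 'I_n -> 'I_n -> nat) i k : {set 'I_n} :=
  [set l | [exists k' : 'I_k.+1, 0 < Pw c k' i l]].
Arguments Rs {n} c i k.

Lemma RsP n (c : 'I_n -> 'I_n -> nat) i k l :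
  reflect (exists2 k', k' <= k & 0 < Pw c k' i l) (l \in Rs c i k).
Proof.
rewrite inE; apply: (iffP existsP) => [[k' Hk']|[k' Hk' H]].
  by exists k' => //; rewrite -ltnS.
by exists (Ordinal (Hk' : k' < k.+1)).
Qed.

Lemma Rs_mono n (c : 'I_n -> 'I_n -> nat) i t m : t <= m -> Rs c i t \subset Rs c i m.
Proof.
move=> Htm; apply/subsetP => l /RsP [k' Hk' H]; apply/RsP; exists k' => //.
exact: leq_trans Htm.
Qed.

Lemma Rs_step n (c : 'I_n -> 'I_n -> nat) i m :
  Rs c i m.+1 \subset Rs c i m -> Rs c i m.+2 \subset Rs c i m.+1.
Proof.
move=> /subsetP Hsub; apply/subsetP => l /RsP [k' Hk' H].
case: (leqP k' m.+1) => [Hlt|Hgt].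
  by apply/RsP; exists k'.
have Heq : k' = m.+2 by apply/eqP; rewrite eqn_leq Hk' Hgt.
move: H; rewrite Heq; rewrite Pw_assoc => /sum_gt0P [q]; rewrite muln_gt0 => /andP [Hq Hcq].
have /Hsub /RsP [k'' Hk'' Hq''] : q \in Rs c i m.+1 by apply/RsP; exists m.+1.
apply/RsP; exists k''.+1; first by [].
rewrite Pw_assoc; apply/sum_gt0P; exists q; rewrite muln_gt0 Hq'' //.
Qed.

Lemma Rs_stable n (c : 'I_n -> 'I_n -> nat) i m :
  Rs c i m.+1 \subset Rs c i m -> forall t, Rs c i t \subset Rs c i m.
Proof.
move=> H.
have Hj : forall j, Rs c i (m + j).+1 \subset Rs c i (m + j).
  by elim=> [|j IH]; rewrite ?addn0 // addnS; apply: Rs_step.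
have Hj' : forall j, Rs c i (m + j) \subset Rs c i m.
  elim=> [|j IH]; first by rewrite addn0.
  by rewrite addnS; apply: subset_trans IH.
move=> t; case: (leqP t m) => Htm; first exact: Rs_mono.
by rewrite -(subnKC (ltnW Htm)); apply: Hj'.
Qed.

Lemma Rs_grow n (c : 'I_n -> 'I_n -> nat) i k :
  k.+1 <= #|Rs c i k| \/ (forall t, Rs c i t \subset Rs c i k).
Proof.
elim: k => [|k IH].
  left; rewrite card_gt0; apply/set0Pn; exists i; apply/RsP; exists 0 => //=.
  by rewrite eqxx.
have Hmono : Rs c i k \subset Rs c i k.+1 by apply: Rs_mono.
case: IH => [Hc|Hst].
  have [Hs|Hns] := boolP (Rs c i k.+1 \subset Rs c i k).
    right => t; apply: subset_trans (Rs_stable _ _ _ _ Hs t) Hmono.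
  left; apply: leq_ltn_trans Hc _; apply: proper_card; rewrite properE Hmono //.
right => t; exact: subset_trans (Hst t) Hmono.
Qed.

Lemma reach n (c : 'I_n -> 'I_n -> nat)
  (Hirr : forall i j, exists k, 0 < k /\ 0 < Pw c k i j) i l :
  exists2 k, k < n & 0 < Pw c k i l.
Proof.
have Hn : 0 < n by case: n c Hirr i {l} => [|n] c Hirr [].
have Hall : forall t, Rs c i t \subset Rs c i n.-1.
  case: (Rs_grow _ c i n.-1) => // Hc t.
  have -> : Rs c i n.-1 = setT.
    apply/eqP; rewrite eqEcard subsetT cardsT card_ord.
    by move: Hc; rewrite (prednK Hn).
  exact: subsetT.
have [k [_ Hk]] := Hirr i l.
have /(subsetP (Hall k)) /RsP [k' Hk' H] : l \in Rs c i k by apply/RsP; exists k.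
by exists k' => //; apply: (leq_ltn_trans Hk'); rewrite prednK.
Qed.

Lemma walk_bound n (c : 'I_n -> 'I_n -> nat)
  (Hirr : forall i j, exists k, 0 < k /\ 0 < Pw c k i j) i :
  \sum_l \sum_j c l j + 1 <= sN c n i + n.
Proof.
pose o l := \sum_j c l j.
have Hpos : forall l, 0 < o l by move=> l; apply: outdeg_pos.
pose D k := \sum_l (0 < Pw c k i l) * (o l).-1.
have Hstep : forall k, sN c k i + D k <= sN c k.+1 i.
  move=> k; rewrite !sN_Pw.
  have -> : \sum_j Pw c k.+1 i j = \sum_l Pw c k i l * o l.
    under eq_bigr do rewrite Pw_assoc.
    by rewrite exchange_big /=; apply: eq_bigr => l _; rewrite big_distrr.
  rewrite /D -big_split /=; apply: leq_sum => l _.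
  have := Hpos l; case: (posnP (Pw c k i l)) => [->|Hp] // Ho.
  rewrite mul1n; nia.
have Hiter : forall k, 1 + \sum_(k' < k) D k' <= sN c k i.
  elim=> [|k IH]; first by rewrite big_ord0.
  rewrite big_ord_recr /=; apply: leq_trans (Hstep k); rewrite addnA leq_add2r //.
have Hreach : forall l, (o l).-1 <= \sum_(k' < n) (0 < Pw c k' i l) * (o l).-1.
  move=> l; have [k Hk Hp] := reach _ c Hirr i l.
  by rewrite (bigD1 (Ordinal Hk)) //= Hp mul1n leq_addr.
have Hsum : \sum_l (o l).-1 <= \sum_(k' < n) D k'.
  rewrite /D exchange_big /=; apply: leq_sum => l _; exact: Hreach.
have Ho : \sum_l o l = \sum_l (o l).-1 + n.
  transitivity (\sum_l ((o l).-1 + 1)).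
    by apply: eq_bigr => l _; rewrite addn1 prednK.
  by rewrite big_split /= sum1_card card_ord.
have := Hiter n; rewrite (_ : \sum_l \sum_j c l j = \sum_l o l) // Ho; lia.
Qed.

Definition Mlen G G' (f : gmap G G') : nat := \sum_(e < nE G) size (mE f e).
Arguments Mlen {G G'} f.

Definition cntE G G' (f : gmap G G') (y : 'I_(nE G')) : nat :=
  \sum_(e < nE G) count (fun d : dart G' => d.1 == y) (mE f e).
Arguments cntE {G G'} f y.

Lemma size_mD G G' (f : gmap G G') d : size (mD f d) = size (mE f d.1).
Proof. by rewrite /mD; case: d.2; rewrite // /Defs.prev size_rev size_map. Qed.

Lemma has_mD G G' (f : gmap G G') d (y : 'I_(nE G')) :
  has (fun x : dart G' => x.1 == y) (mD f d) = has (fun x : dart G' => x.1 == y) (mE f d.1).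
Proof.
rewrite /mD; case: d.2 => //; rewrite /Defs.prev has_rev has_map.
by apply: eq_has => x.
Qed.

Lemma sum_seq_partition (G' : graph) (s : seq (dart G')) (w : 'I_(nE G') -> nat) :
  \sum_(d <- s) w d.1 = \sum_(y < nE G') w y * count (fun d : dart G' => d.1 == y) s.
Proof.
elim: s => [|d s IH]; first by rewrite big_nil big1 // => y _; rewrite muln0.
rewrite big_cons IH /=.
under [RHS]eq_bigr do rewrite mulnDr.
rewrite big_split /=; congr (_ + _).
rewrite (bigD1 d.1) //= eqxx muln1 big1 ?addn0 //.
by move=> y /negbTE; rewrite eq_sym => ->; rewrite muln0.
Qed.

Lemma Mlen_comp G G1 G' (f1 : gmap G G1) (g : gmap G1 G') :
  Mlen (Defs.comp g f1) = \sum_(y < nE G1) size (mE g y) * cntE f1 y.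
Proof.
rewrite /Mlen /cntE /=.
have -> : \sum_(e < nE G) size (flatten (map (mD g) (mE f1 e))) =
          \sum_(e < nE G) \sum_(d <- mE f1 e) size (mE g d.1).
  apply: eq_bigr => e _; rewrite size_flatten /shape -map_comp.
  elim: (mE f1 e) => [|d s IH]; first by rewrite big_nil.
  by rewrite big_cons /= IH size_mD.
transitivity (\sum_(e < nE G) \sum_(y < nE G1) size (mE g y) *
    count (fun d : dart G1 => d.1 == y) (mE f1 e)).
  by apply: eq_bigr => e _; exact: (sum_seq_partition G1 (mE f1 e) (fun y => size (mE g y))).
rewrite exchange_big /=; apply: eq_bigr => y _; rewrite big_distrr //.
Qed.

Lemma Mlen_fold_step G G1 G' (f1 : gmap G G1) (g : gmap G1 G') :
  (forall y, 0 < size (mE g y)) ->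
  (forall y : 'I_(nE G1), 0 < cntE f1 y) ->
  (exists y, 1 < cntE f1 y) ->
  Mlen g < Mlen (Defs.comp g f1).
Proof.
move=> Hg Hc [y0 Hy0]; rewrite Mlen_comp /Mlen.
rewrite [X in X < _](bigD1 y0) // [X in _ < X](bigD1 y0) //=.
rewrite -addSn; apply: leq_add.
  have := Hg y0; nia.
by apply: leq_sum => y _; have := Hc y; nia.
Qed.

Lemma cnt_pos G G1 (f1 : gmap G G1) (y : 'I_(nE G1)) e :
  has (fun d : dart G1 => d.1 == y) (mE f1 e) -> 0 < cntE f1 y.
Proof.
move=> H; rewrite /cntE (bigD1 e) //=; move: H; rewrite has_count; lia.
Qed.

Lemma cnt_two G G1 (f1 : gmap G G1) (y : 'I_(nE G1)) e e' : e != e' ->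
  has (fun d : dart G1 => d.1 == y) (mE f1 e) ->
  has (fun d : dart G1 => d.1 == y) (mE f1 e') -> 1 < cntE f1 y.
Proof.
move=> Hne H H'; rewrite /cntE (bigD1 e) //= (bigD1 e') //=; last by rewrite eq_sym.
move: H H'; rewrite !has_count; lia.
Qed.

Lemma occ_mD G G1 (f1 : gmap G G1) d (y : 'I_(nE G1)) :
  has (fun x : dart G1 => x.1 == y) (mD f1 d) -> 0 < cntE f1 y.
Proof. by rewrite has_mD; apply: cnt_pos. Qed.

Lemma occ2_mD G G1 (f1 : gmap G G1) d d' (y : 'I_(nE G1)) : d.1 != d'.1 ->
  has (fun x : dart G1 => x.1 == y) (mD f1 d) ->
  has (fun x : dart G1 => x.1 == y) (mD f1 d') -> 1 < cntE f1 y.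
Proof. by rewrite !has_mD; apply: cnt_two. Qed.

Lemma dart_ne G (e0 e1 : dart G) : e0 != e1 -> e1 != drev e0 -> e0.1 != e1.1.
Proof.
case: e0 e1 => [a b] [a' b'] /= H1 H2; apply/eqP => E; move: H1 H2.
by rewrite E /drev /=; case: b b' => [] [] /=; rewrite eqxx.
Qed.

Lemma fold_cnt G G1 (f1 : gmap G G1) : is_fold f1 ->
  (forall y : 'I_(nE G1), 0 < cntE f1 y) /\ (exists y : 'I_(nE G1), 1 < cntE f1 y).
Proof.
move=> [_ [e0 [e1 [Hne Hnr Hsrc Hcase]]]].
have Hd := dart_ne _ _ _ Hne Hnr.
have hasx : forall (x : dart G1) s, has (fun z : dart G1 => z.1 == x.1) (x :: s).
  by move=> x s; rewrite /= eqxx.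
case: Hcase => [Hf|[Hc|Hp]].
- move: Hf => [_ [s [x [Hs [He1 [_ [_ Hsurj]]]]]]].
  split.
    move=> y; case: (Hsurj y) => [->|[d [Hd1 <-]]].
      by apply: (occ_mD _ _ _ e1); rewrite He1 /= eqxx orbT.
    by apply: (occ_mD _ _ _ d); rewrite Hs.
  exists (s e0).1; apply: (occ2_mD _ _ _ e0 e1) => //.
    by rewrite Hs.
  by rewrite He1.
- move: Hc => [_ [_ [s [Hs [Hiff Hsurj]]]]].
  split.
    move=> y; case: (Hsurj (y, true)) => d Hdy.
    by apply: (occ_mD _ _ _ d); rewrite Hs Hdy /= eqxx.
  have E : s e0 = s e1 by apply/Hiff; right; left.
  exists (s e0).1; apply: (occ2_mD _ _ _ e0 e1) => //.
    by rewrite Hs.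
  by rewrite Hs E.
- move: Hp => [_ [u [s [a [b [c [_ [_ [_ [Hs [He0 [He1 [_ [_ [_ Hsurj]]]]]]]]]]]]]]].
  split.
    move=> y; case: (Hsurj y) => [|[d [Hd0 Hd1 <-]]].
      rewrite !inE => /or3P [] /eqP ->.
      + by apply: (occ_mD _ _ _ e0); rewrite He0.
      + by apply: (occ_mD _ _ _ e0); rewrite He0 /= eqxx orbT.
      + by apply: (occ_mD _ _ _ e1); rewrite He1 /= eqxx orbT.
    by apply: (occ_mD _ _ _ d); rewrite Hs.
  exists a.1; apply: (occ2_mD _ _ _ e0 e1) => //.
    by rewrite He0.
  by rewrite He1.
Qed.

Lemma chain_len G G' (f : gmap G G') m : fold_chain f m ->
  (forall e, 0 < size (mE f e)) /\ nE G' + m <= Mlen f.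
Proof.
elim => {G G' f m}.
- move=> G G' h [_ [_ [s [Hsb Hs]]]].
  have Hsz : forall e, size (mE h e) = 1.
    by move=> e; have := Hs (e, true); rewrite /mD /= => ->.
  split; first by move=> e; rewrite Hsz.
  rewrite /Mlen (eq_bigr (fun _ => 1)) ?sum1_card ?card_ord ?addn0; last by move=> e _; rewrite Hsz.
  have := bij_eq_card Hsb; rewrite !card_prod !card_ord card_bool.
  by rewrite !muln2 => /double_inj ->.
- move=> G G1 G' f1 g f m [Hgm Hfold] Hg [Hgne Hglen] [_ Heq].
  have [Hc1 Hc2] := fold_cnt _ _ f1 (conj Hgm Hfold).
  split.
    move=> e; rewrite Heq /=.
    have := Hgm e; case: (mE f1 e) => [|d s] //= _.
    by rewrite size_cat size_mD; apply: leq_trans (Hgne d.1) (leq_addr _ _).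
  have -> : Mlen f = Mlen (Defs.comp g f1) by rewrite /Mlen; apply: eq_bigr => e _; rewrite Heq.
  rewrite addnS; apply: leq_ltn_trans Hglen _.
  exact: Mlen_fold_step.
Qed.

Import Num.Def.
Local Open Scope ring_scope.

Lemma prod_pos (rs : seq algC) (F : algC -> algC) :
  \prod_(z <- rs) ('X - (z^*)%:P) = \prod_(z <- rs) ('X - z%:P) ->
  (forall z, z \in rs -> z \is Num.real -> 0 < F z) ->
  (forall z, F z^* = (F z)^*) ->
  (forall z, z \in rs -> F z != 0) ->
  0 < \prod_(z <- rs) F z.
Proof.
move: {2}(size rs) (leqnn (size rs)) => N; elim: N rs => [|N IH] rs.
  by rewrite leqn0 => /nilP -> _ _ _ _; rewrite big_nil ltr01.
case: rs => [|mu rs] Hs Hp Hpos HF Hnz; first by rewrite big_nil ltr01.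
rewrite !big_cons in Hp *.
have Xnz : forall a : algC, 'X - a%:P != 0 by move=> a; rewrite polyXsubC_eq0.
have [Hr|Hnr] := boolP (mu \is Num.real).
  have Hmu : mu^* = mu by apply/eqP; rewrite -CrealE.
  rewrite Hmu in Hp; have Hp' := mulfI (Xnz mu) Hp.
  apply: mulr_gt0; first by apply: Hpos; rewrite ?mem_head.
  apply: IH => //.
  - by move=> z Hz Hzr; apply: Hpos; rewrite // inE Hz orbT.
  - by move=> z Hz; apply: Hnz; rewrite inE Hz orbT.
have Hne : mu^* != mu by rewrite -CrealE.
have Hin : mu^* \in rs.
  have : root (('X - (mu^*)%:P) * \prod_(z <- rs) ('X - (z^*)%:P)) mu^*.
    by rewrite rootM root_XsubC eqxx.
  rewrite Hp rootM root_XsubC (negbTE Hne) /= root_prod_XsubC //.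
have Hperm := perm_to_rem Hin.
rewrite !(perm_big _ Hperm) /= !big_cons conjCK in Hp *.
have Hp2 : ('X - mu%:P) * (('X - (mu^*)%:P) * \prod_(z <- rem mu^* rs) ('X - (z^*)%:P))
   = ('X - mu%:P) * (('X - (mu^*)%:P) * \prod_(z <- rem mu^* rs) ('X - z%:P)).
  by rewrite mulrCA Hp.
have Hp3 := mulfI (Xnz _) (mulfI (Xnz _) Hp2).
rewrite mulrA HF; apply: mulr_gt0.
  by rewrite mul_conjC_gt0 Hnz // mem_head.
have Hsub : forall z, z \in rem mu^* rs -> z \in mu :: rs.
  by move=> z /mem_rem Hz; rewrite inE Hz orbT.
apply: IH => //.
- by rewrite size_rem // (leq_trans (leq_pred _)).
- by move=> z /Hsub; apply: Hpos.
- by move=> z /Hsub; apply: Hnz.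
Qed.

Definition rpoly (q : {poly algC}) := map_poly conjC q = q.

Lemma rpoly_real q x : rpoly q -> x \is Num.real -> q.[x] \is Num.real.
Proof.
move=> Hq; rewrite !CrealE => /eqP Hx.
have := horner_map conjC q x; rewrite Hq /= Hx => E.
by rewrite {2}E.
Qed.

Lemma rpoly_factor q : q != 0 -> rpoly q -> exists rs : seq algC,
  [/\ q = lead_coef q *: \prod_(z <- rs) ('X - z%:P),
      \prod_(z <- rs) ('X - (z^*)%:P) = \prod_(z <- rs) ('X - z%:P),
      lead_coef q \is Num.real & lead_coef q != 0].
Proof.
move=> Hq0 Hq; have [rs Hrs] := closed_field_poly_normal q.
have Hl : lead_coef q \is Num.real.
  by rewrite CrealE -lead_coef_map Hq.
have Hl0 : lead_coef q != 0 by rewrite lead_coef_eq0.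
exists rs; split => //.
have : map_poly conjC q = q by [].
rewrite {1}Hrs linearZ /= rmorph_prod /=.
move: Hl; rewrite CrealE => /eqP ->.
rewrite {2}Hrs => /(scalerI Hl0) <-.
by apply: eq_bigr => z _; rewrite map_polyXsubC.
Qed.

Lemma real_mulpos (x y : algC) : x \is Num.real -> y \is Num.real ->
  x < 0 -> y < 0 -> 0 < x * y.
Proof. by move=> _ _ hx hy; rewrite -mulrNN mulr_gt0 // oppr_gt0. Qed.

Lemma sign_interval q a b : q != 0 -> rpoly q -> a \is Num.real -> b \is Num.real ->
  a <= b -> (forall x, x \is Num.real -> a <= x -> x <= b -> ~~ root q x) ->
  0 < q.[a] * q.[b].
Proof.
move=> Hq0 Hq Ha Hb Hab Hno.
have [rs [Hrs Hc Hl Hl0]] := rpoly_factor _ Hq0 Hq.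
rewrite Hrs !hornerZ !horner_prod mulrACA -big_split /=.
apply: mulr_gt0.
  have -> : lead_coef q * lead_coef q = lead_coef q * (lead_coef q)^*.
    by move: Hl; rewrite CrealE => /eqP ->.
  by rewrite mul_conjC_gt0.
have Hroot : forall z, z \in rs -> root q z.
  by move=> z Hz; rewrite Hrs rootZ // root_prod_XsubC.
apply: prod_pos => //.
- move=> z Hz Hzr; rewrite !hornerXsubC.
  have := Hno z Hzr; rewrite Hroot // => Hn.
  have /orP [Hza|Hza] := real_leVge Hzr Ha.
    have Hza' : z < a.
      rewrite lt_def Hza andbT; apply/eqP => Ez; move: Hn; rewrite -Ez lexx Hab.
      by move/(_ isT isT).
    by apply: mulr_gt0; rewrite subr_gt0 //; apply: lt_le_trans Hab.
  have /orP [Hzb|Hzb] := real_leVge Hzr Hb.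
    by move: (Hn Hza Hzb).
  have Hzb' : b < z.
    rewrite lt_def Hzb andbT; apply/eqP => Ez; move: Hn; rewrite Ez lexx Hab.
    by move/(_ isT isT).
  apply: real_mulpos; rewrite ?rpredB ?subr_lt0 //.
  by apply: le_lt_trans Hzb'.
- move=> z; rewrite !hornerXsubC rmorphM !rmorphB /=.
  by move: Ha Hb; rewrite !CrealE => /eqP -> /eqP ->.
- move=> z Hz; rewrite !hornerXsubC mulf_eq0 !subr_eq0; apply/negP => /orP [] /eqP E.
    by move: (Hno a Ha (lexx a) Hab); rewrite E Hroot.
  by move: (Hno b Hb Hab (lexx b)); rewrite E Hroot.
Qed.

Lemma sign_ray q a : q \is monic -> rpoly q -> a \is Num.real ->
  (forall x, x \is Num.real -> a <= x -> ~~ root q x) -> 0 < q.[a].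
Proof.
move=> Hm Hq Ha Hno.
have Hq0 : q != 0 by apply: monic_neq0.
have [rs [Hrs Hc Hl Hl0]] := rpoly_factor _ Hq0 Hq.
rewrite Hrs (monicP Hm) scale1r horner_prod.
have Hroot : forall z, z \in rs -> root q z.
  by move=> z Hz; rewrite Hrs rootZ // root_prod_XsubC.
apply: prod_pos => //.
- move=> z Hz Hzr; rewrite !hornerXsubC subr_gt0.
  have /orP [Hza|Hza] := real_leVge Hzr Ha.
    rewrite lt_def Hza andbT; apply/eqP => Ez.
    by move: (Hno a Ha (lexx a)); rewrite Ez Hroot.
  by move: (Hno z Hzr Hza); rewrite Hroot.
- move=> z; rewrite !hornerXsubC rmorphB /=.
  by move: Ha; rewrite !CrealE => /eqP ->.
- move=> z Hz; rewrite !hornerXsubC subr_eq0; apply/eqP => E.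
  by move: (Hno a Ha (lexx a)); rewrite E Hroot.
Qed.

Lemma seq_max (s : seq algC) : all (fun x => x \is Num.real) s -> s != [::] ->
  exists2 x, x \in s & forall y, y \in s -> y <= x.
Proof.
elim: s => [|a s IH] //= /andP [Ha Hs] _.
case: s IH Hs => [|b s] IH Hs.
  by exists a; rewrite ?mem_head // => y; rewrite inE => /eqP ->.
have [x Hx Hmax] := IH Hs isT.
have Hxr : x \is Num.real by move/allP: Hs; apply.
have /orP [Hax|Hxa] := real_leVge Ha Hxr.
  exists x; first by rewrite inE Hx orbT.
  by move=> y; rewrite inE => /orP [/eqP ->|/Hmax].
exists a; first by rewrite mem_head.
by move=> y; rewrite inE => /orP [/eqP ->|/Hmax /le_trans]; [|apply].
Qed.

Lemma seq_min (s : seq algC) : all (fun x => x \is Num.real) s -> s != [::] ->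
  exists2 x, x \in s & forall y, y \in s -> x <= y.
Proof.
move=> Hs Hne.
have H1 : all (fun x => x \is Num.real) (map -%R s).
  by apply/allP => y /mapP [z Hz ->]; rewrite rpredN; move/allP: Hs; apply.
have H2 : map -%R s != [::] by case: s Hne {Hs H1}.
have [x Hx Hmax] := seq_max _ H1 H2.
move/mapP: Hx => [z Hz Ex]; exists z => // y Hy.
by have := Hmax (- y) (map_f _ Hy); rewrite Ex lerN2.
Qed.

Lemma max_root q (a b : algC) : q != 0 ->
  (exists x, [/\ x \is Num.real, a <= x, x <= b & root q x]) ->
  exists x, [/\ x \is Num.real, a <= x, x <= b, root q x &
     forall y, y \is Num.real -> a <= y -> y <= b -> root q y -> y <= x].
Proof.
move=> Hq0 [x0 [Hx0 Hax0 Hx0b Hr0]].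
have [rs Hrs] := closed_field_poly_normal q.
have Hl0 : lead_coef q != 0 by rewrite lead_coef_eq0.
have Hroot : forall y, root q y = (y \in rs).
  by move=> y; rewrite {1}Hrs rootZ // root_prod_XsubC.
pose P y := [&& y \is Num.real, a <= y & y <= b].
have H1 : all (fun x => x \is Num.real) (filter P rs).
  by apply/allP => y; rewrite mem_filter => /andP [/and3P []].
have H2 : filter P rs != [::].
  apply/eqP => /(congr1 (fun s => x0 \in s)); rewrite mem_filter /P Hx0 Hax0 Hx0b.
  by rewrite -Hroot Hr0.
have [x Hx Hmax] := seq_max _ H1 H2.
move: Hx; rewrite mem_filter => /andP [/and3P [Hxr Hax Hxb] Hxs].
exists x; split => //; first by rewrite Hroot.
by move=> y Hy Hay Hyb Hry; apply: Hmax; rewrite mem_filter /P Hy Hay Hyb -Hroot.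
Qed.

Definition vp n (T : 'M[algC]_n) (k : 'I_n) : {poly algC} :=
  \sum_j (\adj (char_poly_mx T)) k j.
Arguments vp {n} T k.

Lemma nonneg_real (x : algC) : 0 <= x -> x^* = x.
Proof. by move=> /ger0_real; rewrite CrealE => /eqP. Qed.

Lemma conj_T n (T : 'M[algC]_n) : (forall i j, 0 <= T i j) -> map_mx conjC T = T.
Proof. by move=> hT; apply/matrixP => i j; rewrite mxE nonneg_real. Qed.

Lemma rpoly_char n (T : 'M[algC]_n) : (forall i j, 0 <= T i j) -> rpoly (char_poly T).
Proof. by move=> hT; rewrite /rpoly map_char_poly conj_T. Qed.

Lemma rpoly_vp n (T : 'M[algC]_n) k : (forall i j, 0 <= T i j) -> rpoly (vp T k).
Proof.
move=> hT; rewrite /rpoly /vp rmorph_sum /=.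
have E : map_mx (map_poly conjC) (\adj (char_poly_mx T)) = \adj (char_poly_mx T).
  by rewrite map_mx_adj map_char_poly_mx conj_T.
by apply: eq_bigr => j _; rewrite -{2}E [in RHS]mxE.
Qed.

Lemma eval_cpmx n (T : 'M[algC]_n) (y : algC) :
  map_mx (horner_eval y) (char_poly_mx T) = y%:M - T.
Proof.
apply/matrixP => i j; rewrite !mxE /horner_eval hornerD hornerN hornerC.
by rewrite hornerMn hornerX.
Qed.

Lemma eval_vp n (T : 'M[algC]_n) k y :
  (vp T k).[y] = \sum_j (\adj (y%:M - T)) k j.
Proof.
rewrite /vp horner_sum -eval_cpmx -map_mx_adj.
by apply: eq_bigr => j _; rewrite [in RHS]mxE.
Qed.

Lemma eval_char n (T : 'M[algC]_n) y : (char_poly T).[y] = \det (y%:M - T).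
Proof. by rewrite -eval_cpmx det_map_mx. Qed.

Lemma vp_eq n (T : 'M[algC]_n) y i :
  y * (vp T i).[y] - \sum_k T i k * (vp T k).[y] = (char_poly T).[y].
Proof.
have H := mul_mx_adj (y%:M - T).
have H1 := congr1 (fun M : 'M[algC]_n => \sum_j M i j) H.
have Hr : \sum_j ((\det (y%:M - T))%:M : 'M[algC]_n) i j = \det (y%:M - T).
  rewrite (bigD1 i) //= big1 => [|j /negbTE nji]; rewrite mxE ?eqxx ?mulr1n ?addr0 //.
  by rewrite eq_sym nji mulr0n.
rewrite eval_char -Hr -H1 /=.
under [RHS]eq_bigr do rewrite mxE.
rewrite exchange_big /=.
under [RHS]eq_bigr do rewrite -mulr_sumr -eval_vp !mxE mulrBl.
rewrite sumrB [X in _ = X - _](bigD1 i) //= eqxx mulr1n [X in _ = _ + X - _]big1 ?addr0 //.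
by move=> j /negbTE; rewrite eq_sym => ->; rewrite mulr0n mul0r.
Qed.

Lemma sum_ge_term n (F : 'I_n -> algC) i0 : (forall i, 0 <= F i) -> F i0 <= \sum_i F i.
Proof. by move=> HF; rewrite (bigD1 i0) //= lerDl sumr_ge0. Qed.

Lemma root_prod_vp n (T : 'M[algC]_n) k x :
  root (vp T k) x -> root (\prod_k vp T k) x.
Proof.
move=> /rootP H; apply/rootP; rewrite horner_prod (bigD1 k) //= H mul0r //.
Qed.

Lemma PF_pos n (T : 'M[algC]_n) (hT : forall i j, 0 <= T i j) (z : algC) :
  z \is Num.real -> (forall y, y \is Num.real -> z <= y -> ~~ root (char_poly T) y) ->
  0 < (char_poly T).[z] /\ forall k, 0 < (vp T k).[z].
Proof.
move=> Hz Hroots.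
have ppos : forall y, y \is Num.real -> z <= y -> 0 < (char_poly T).[y].
  move=> y Hy Hzy; apply: sign_ray => //; first exact: char_poly_monic.
    exact: rpoly_char.
  by move=> x Hx Hyx; apply: Hroots => //; apply: le_trans Hyx.
split; first by apply: ppos.
have G : forall y, y \is Num.real -> 0 < (char_poly T).[y] ->
    (forall k, 0 <= (vp T k).[y]) -> forall k, 0 < (vp T k).[y].
  move=> y Hy Hp Hv k; have E := vp_eq _ T y k.
  have Hs : 0 <= \sum_j T k j * (vp T j).[y] by apply: sumr_ge0 => j _; apply: mulr_ge0.
  have Hyv : 0 < y * (vp T k).[y].
    have -> : y * (vp T k).[y] = (char_poly T).[y] + \sum_j T k j * (vp T j).[y].
      by rewrite -E subrK.
    by apply: (lt_le_trans Hp); rewrite lerDl.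
  rewrite lt_def Hv andbT; apply/eqP => E0; move: Hyv; rewrite E0 mulr0 ltxx //.
pose zs := `|z| + 1 + \sum_i \sum_j T i j.
have Hsum0 : 0 <= \sum_i \sum_j T i j by apply: sumr_ge0 => i _; apply: sumr_ge0.
have Hzs0 : 0 < zs by rewrite /zs -addrA ltr_wpDl // ltr_wpDr.
have Hzsr : zs \is Num.real by apply: gtr0_real.
have Hzzs : z <= zs.
  rewrite /zs -addrA; apply: le_trans (real_ler_norm Hz) _.
  by rewrite lerDl addr_ge0.
have Hrow : forall i, 1 <= zs - \sum_j T i j.
  move=> i; rewrite -subr_ge0.
  have -> : zs - \sum_j T i j - 1 = `|z| + (\sum_i \sum_j T i j - \sum_j T i j).
    by rewrite /zs; ring.
  apply: addr_ge0 => //; rewrite subr_ge0.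
  by apply: (sum_ge_term n (fun i => \sum_j T i j)) => k; apply: sumr_ge0.
have Hvzs : forall k, 0 < (vp T k).[zs].
  move=> k.
  have Hpzs := ppos zs Hzsr Hzzs.
  pose w j := (vp T j).[zs] / (char_poly T).[zs].
  have Hwr : forall j, w j \is Num.real.
    move=> j; apply: rpredM; first by apply: rpoly_real => //; apply: rpoly_vp.
    by rewrite realV; apply: gtr0_real.
  have H1 : all (fun x => x \is Num.real) (map w (enum 'I_n)).
    by apply/allP => x /mapP [j _ ->].
  have H2 : map w (enum 'I_n) != [::].
    apply/eqP => /(congr1 (fun s => w k \in s)); rewrite map_f // mem_enum //.
  have [x /mapP [i0 _ ->] Hmin] := seq_min _ H1 H2.
  have Hmin' : forall j, w i0 <= w j by move=> j; apply: Hmin; rewrite map_f ?mem_enum.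
  have Eq : zs * w i0 - \sum_j T i0 j * w j = 1.
    have E := vp_eq _ T zs i0.
    have -> : \sum_j T i0 j * w j = (\sum_j T i0 j * (vp T j).[zs]) / (char_poly T).[zs].
      by rewrite mulr_suml; apply: eq_bigr => j _; rewrite /w mulrA.
    by rewrite /w mulrA -mulrBl E divff // gt_eqF.
  have Hw0 : 0 < w i0.
    have : 1 <= (zs - \sum_j T i0 j) * w i0.
      rewrite -Eq mulrBl lerD2l lerN2 mulr_suml; apply: ler_sum => j _.
      by apply: ler_wpM2l.
    move=> H; have Hpos : 0 < (zs - \sum_j T i0 j) * w i0 by apply: lt_le_trans H.
    by rewrite pmulr_rgt0 // in Hpos; apply: lt_le_trans (Hrow i0).
  have : 0 < w k by apply: lt_le_trans (Hmin' k).
  by rewrite /w pmulr_lgt0 // invr_gt0.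
pose P := \prod_k vp T k.
have HPzs : 0 < P.[zs] by rewrite /P horner_prod; apply: prodr_gt0 => k _.
have HP0 : P != 0 by apply/eqP => E; move: HPzs; rewrite E horner0 ltxx.
have HPr : rpoly P.
  by rewrite /rpoly /P rmorph_prod; apply: eq_bigr => k _; apply: rpoly_vp.
have Hvp0 : forall k, vp T k != 0.
  by move=> k; apply/eqP => E; move: (Hvzs k); rewrite E horner0 ltxx.
have Hno : forall y, y \is Num.real -> z <= y -> y <= zs -> ~~ root P y.
  move=> y Hy Hzy Hyzs; apply/negP => Hry.
  have [x [Hxr Hzx Hxzs HrPx Hmax]] : exists x, [/\ x \is Num.real, z <= x, x <= zs, root P x &
     forall y, y \is Num.real -> z <= y -> y <= zs -> root P y -> y <= x].
    by apply: max_root => //; exists y.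
  have Hge : forall k, 0 <= (vp T k).[x].
    move=> k; have [E0|Enz] := eqVneq (vp T k).[x] 0; first by rewrite E0.
    have : 0 < (vp T k).[x] * (vp T k).[zs].
      apply: (sign_interval _ _ _ (Hvp0 k) (rpoly_vp _ T k hT)) => //.
      move=> t Ht Hxt Htzs; apply/negP => Hrt.
      have Htx : t <= x by apply: Hmax => //; [apply: le_trans Hxt | apply: root_prod_vp Hrt].
      have Et : t = x by apply/eqP; rewrite eq_le Htx Hxt.
      by move: Hrt; rewrite Et => /rootP; apply/eqP.
    by rewrite pmulr_lgt0 // => /ltW.
  have Hgt := G x Hxr (ppos x Hxr Hzx) Hge.
  move: HrPx => /rootP; rewrite /P horner_prod => /eqP; apply/negP.
  by rewrite gt_eqF // prodr_gt0.
move=> k.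
have : 0 < (vp T k).[z] * (vp T k).[zs].
  apply: (sign_interval _ _ _ (Hvp0 k) (rpoly_vp _ T k hT)) => //.
  move=> t Ht Hzt Htzs; apply/negP => Hrt.
  by move: (Hno t Ht Hzt Htzs); rewrite (root_prod_vp _ _ _ _ Hrt).
by rewrite pmulr_lgt0.
Qed.

Fixpoint sf n (T : 'M[algC]_n) (k : nat) (i : 'I_n) : algC :=
  if k is k'.+1 then \sum_j T i j * sf n T k' j else 1.
Fixpoint Uf n (T : 'M[algC]_n) (z : algC) (k : nat) (i : 'I_n) : algC :=
  if k is k'.+1 then \sum_j T i j * Uf n T z k' j + z ^+ k' else 0.
Arguments sf {n} T k i.
Arguments Uf {n} T z k i.

Lemma U_eq n (T : 'M[algC]_n) z k i :
  z * Uf T z k i = \sum_j T i j * Uf T z k j + z ^+ k - sf T k i.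
Proof.
elim: k i => [|k IH] i /=; first by rewrite mulr0 big1 ?add0r ?subrr // => j _; rewrite mulr0.
rewrite mulrDr mulr_sumr -exprS.
have -> : \sum_j z * (T i j * Uf T z k j) = \sum_j T i j * (z * Uf T z k j).
  by apply: eq_bigr => j _; rewrite mulrCA.
have -> : \sum_j T i j * (z * Uf T z k j) = \sum_j T i j * (\sum_j0 T j j0 * Uf T z k j0 + z ^+ k - sf T k j).
  by apply: eq_bigr => j _; rewrite IH.
have -> : \sum_j T i j * (\sum_j0 T j j0 * Uf T z k j0 + z ^+ k - sf T k j) =
   \sum_j T i j * (\sum_j0 T j j0 * Uf T z k j0 + z ^+ k) - \sum_j T i j * sf T k j.
  by rewrite -sumrB; apply: eq_bigr => j _; rewrite mulrBr.
by rewrite addrAC.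
Qed.

Lemma U_ge0 n (T : 'M[algC]_n) (hT : forall i j, 0 <= T i j) z k i :
  0 <= z -> z ^+ k.-1 *+ (k != 0) <= Uf T z k i.
Proof.
move=> Hz; elim: k i => [|k IH] i /=; first by rewrite mulr0n.
rewrite mulr1n lerDr; apply: sumr_ge0 => j _; apply: mulr_ge0 => //.
by apply: le_trans (IH j); case: k {IH} => //= k; rewrite mulr1n exprn_ge0.
Qed.

Lemma PF_final n (T : 'M[algC]_n) (hT : forall i j, 0 <= T i j) (i0 : 'I_n) z N :
  z \is Num.real -> 0 < z ->
  (forall y, y \is Num.real -> z <= y -> ~~ root (char_poly T) y) ->
  (forall i, z ^+ N.+1 < sf T N.+1 i) -> False.
Proof.
move=> Hz Hz0 Hroots Hs.
have [Hp Hv] := PF_pos _ T hT z Hz Hroots.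
pose u i := Uf T z N.+1 i.
have Hu : forall i, 0 < u i.
  move=> i; apply: lt_le_trans (U_ge0 _ T hT z N.+1 i (ltW Hz0)).
  by rewrite /= mulr1n exprn_gt0.
pose r i := u i / (vp T i).[z].
have Hr : forall i, 0 < r i by move=> i; rewrite /r divr_gt0.
have H1 : all (fun x => x \is Num.real) (map r (enum 'I_n)).
  by apply/allP => x /mapP [j _ ->]; apply: gtr0_real.
have H2 : map r (enum 'I_n) != [::].
  apply/eqP => /(congr1 (fun s => r i0 \in s)); rewrite map_f // mem_enum //.
have [x /mapP [i1 _ ->] Hmin] := seq_max _ H1 H2.
have Hmin' : forall j, r j <= r i1 by move=> j; apply: Hmin; rewrite map_f ?mem_enum.
have Hu' : forall j, u j <= r i1 * (vp T j).[z].
  by move=> j; have := Hmin' j; rewrite /r ler_pdivrMr.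
have Hu1 : u i1 = r i1 * (vp T i1).[z] by rewrite /r divfK // gt_eqF.
have E := U_eq _ T z N.+1 i1.
have : z * u i1 - \sum_j T i1 j * u j < 0.
  by rewrite /u E addrC addrA addKr subr_lt0.
have : 0 < z * u i1 - \sum_j T i1 j * u j.
  apply: (@lt_le_trans _ _ (r i1 * (char_poly T).[z])); first by apply: mulr_gt0.
  rewrite -(vp_eq _ T z i1) mulrBr mulr_sumr Hu1 mulrCA lerD2l lerN2.
  by apply: ler_sum => j _; rewrite mulrCA; apply: ler_wpM2l.
move=> Ha Hb; by have := lt_trans Ha Hb; rewrite ltxx.
Qed.

Lemma count_sum_size (G : graph) (s : seq (dart G)) :
  (\sum_(j < nE G) count (fun d : dart G => d.1 == j) s)%N = size s.
Proof.
elim: s => [|d s IH] /=; first by rewrite big1.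
rewrite big_split /= IH (bigD1 d.1) //= eqxx big1 // => j /negbTE.
by rewrite eq_sym => ->.
Qed.

Theorem theoremA (G : graph) (f : gmap G G) (m : nat) (lam : algC) :
  is_graph_map f ->
  irreducible_map f ->
  is_heq f ->
  has_fold_decomposition f m ->
  largest_eigenvalue (transition f) lam ->
  (nE G).-root ((m + 1)%:R) <= lam.
Proof.
move=> Hgm [Hirr _] _ Hfd [Heig [Hlamr Hmax]].
set n := nE G in Hirr Heig Hmax *.
set T := transition f in Hirr Heig Hmax *.
pose c (i j : 'I_n) := count (fun d : dart G => d.1 == j) (mE f i).
have HT : forall i j, T i j = (c i j)%:R by move=> i j; rewrite /T /transition mxE.
have hT : forall i j, 0 <= T i j by move=> i j; rewrite HT ler0n.
have HPw : forall k i j, (T ^+ k) i j = (Pw c k i j)%:R.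
  elim=> [|k IH] i j; first by rewrite expr0 mxE /=; case: (i == j).
  rewrite exprS -mulmxE mxE /= natr_sum; apply: eq_bigr => l _.
  by rewrite IH HT natrM.
have Hsf : forall k i, sf T k i = (sN c k i)%:R.
  elim=> [|k IH] i //=; rewrite natr_sum; apply: eq_bigr => j _.
  by rewrite IH HT natrM.
have Hirr' : forall i j, exists k, (0 < k)%N /\ (0 < Pw c k i j)%N.
  move=> i j; have [k [Hk H]] := Hirr i j; exists k; split => //.
  by move: H; rewrite HPw ltr0n.
have Hn : (0 < n)%N.
  move: Heig; rewrite eigenvalue_root_char => Hr.
  have := root_size_gt1 _ Hr; rewrite size_char_poly; apply.
  by rewrite -size_poly_eq0 size_char_poly.
have [_ Hlen] := chain_len _ _ f m Hfd.
have HL : Mlen f = (\sum_l \sum_j c l j)%N.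
  by rewrite /Mlen; apply: eq_bigr => l _; rewrite /c count_sum_size.
have Hwalk : forall i, (m + 1 <= sN c n i)%N.
  move=> i; have := walk_bound _ c Hirr' i; rewrite -HL.
  move: Hlen; rewrite -/n; lia.
pose rho := n.-root ((m + 1)%:R : algC).
have Hrho0 : 0 < rho by rewrite rootC_gt0 // ltr0n addn1.
have Hrhor : rho \is Num.real by apply: gtr0_real.
have HrhoX : rho ^+ n = (m + 1)%:R by rewrite rootCK.
rewrite -/rho (real_leNgt Hrhor Hlamr); apply/negP => Hlt.
pose z0 := if 0 <= lam then lam else 0.
have Hz0r : z0 \is Num.real by rewrite /z0; case: ifP.
have Hz0ge : 0 <= z0 by rewrite /z0; case: ifP.
have Hz0lam : lam <= z0.
  rewrite /z0; case: ifP => // /negbT; rewrite (real_leNgt (real0 _) Hlamr) negbK.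
  exact: ltW.
have Hz0rho : z0 < rho by rewrite /z0; case: ifP.
pose z := (z0 + rho) / 2.
have [Hz0z Hzrho] := midf_lt Hz0rho.
have Hz : 0 < z by apply: le_lt_trans Hz0z.
have Hzr : z \is Num.real by apply: gtr0_real.
have Hroots : forall y, y \is Num.real -> z <= y -> ~~ root (char_poly T) y.
  move=> y Hy Hzy; apply/negP => Hr.
  have := Hmax y; rewrite eigenvalue_root_char => /(_ Hr Hy) Hyl.
  have : y < y by apply: le_lt_trans Hyl (le_lt_trans Hz0lam (lt_le_trans Hz0z Hzy)).
  by rewrite ltxx.
have Hs : forall i, z ^+ (n.-1).+1 < sf T (n.-1).+1 i.
  move=> i; rewrite prednK // Hsf.
  apply: (lt_le_trans (y := rho ^+ n)); first by rewrite ltrXn2r ?(ltW Hz) // -lt0n.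
  by rewrite HrhoX ler_nat.
exact: (PF_final _ T hT (Ordinal Hn) z n.-1 Hzr Hz Hroots Hs).
Qed.
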